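(* Under the CRFE, $(\hat{\boldsymbol{\tau}}'-\boldsymbol{\tau}',\hat{\boldsymbol{\theta}}_x')'$ has mean zero, and for $1\le h\le H$, $\mathrm{Cov}(\hat{\boldsymbol{\tau}}-\boldsymbol{\tau},\hat{\boldsymbol{\theta}}_x[h])=\boldsymbol{W}_{\tau x}[h]=2^{-2(K-1)}\sum_{q=1}^Qn_q^{-1}(\boldsymbol{b}_q\boldsymbol{c}_q[h]')\otimes\boldsymbol{S}_{q,x}$, $\mathrm{Cov}(\hat{\boldsymbol{\theta}}_x[h])=\boldsymbol{W}_{xx}[h]=2^{-2(K-1)}\sum_{q=1}^Qn_q^{-1}(\boldsymbol{c}_q[h]\boldsymbol{c}_q[h]')\otimes\boldsymbol{S}_{xx}$, and $\mathrm{Cov}(\hat{\boldsymbol{\theta}}_x[h],\hat{\boldsymbol{\theta}}_x[\tilde h])=\boldsymbol{0}$ for $h\ne\tilde h$.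
   Context: Setup ($2^K$ factorial experiment, finite population). $K\ge1$ two-level factors, $Q=2^K$ treatment combinations $q=1,\dots,Q$; combination $q$ sets factor $k$ at $\iota_k(q)\in\{-1,+1\}$, bijectively onto $\{-1,+1\}^K$. $F=Q-1$ factorial effects, one per nonempty $A\subseteq\{1,\dots,K\}$, enumerated $f=1,\dots,F$, with $g_{fq}=\prod_{k\in A}\iota_k(q)$; $\boldsymbol{b}_q=(g_{1q},\dots,g_{Fq})'$. Units $i=1,\dots,n$ have fixed potential outcomes $Y_i(q)$ and covariates $\boldsymbol{x}_i\in\mathbb{R}^L$; $\bar Y(q),\bar{\boldsymbol{x}}$ means; $\boldsymbol{\tau}=2^{-(K-1)}\sum_q\boldsymbol{b}_q\bar Y(q)$. Finite-population (co)variances with divisor $n-1$: $\boldsymbol{S}_{xx}$ of $\boldsymbol{x}$; $\boldsymbol{S}_{q,x}$ between $Y(q)$ and $\boldsymbol{x}$. CRFE: fixed $n_q\ge1$, $\sum n_q=n$; $\boldsymbol{Z}$ uniform over assignments with $n_q$ units in combination $q$; $\hat{\bar Y}(q),\hat{\bar{\boldsymbol{x}}}(q)$ group-$q$ means of observed outcomes $Y_i(Z_i)$ and covariates; $\hat{\boldsymbol{\tau}}=2^{-(K-1)}\sum_q\boldsymbol{b}_q\hat{\bar Y}(q)$. Tiers: partition $\{1,\dots,F\}$ into disjoint nonempty $\mathcal{F}_1,\dots,\mathcal{F}_H$, $\mathcal{F}_{\overline h}=\bigcup_{l\le h}\mathcal{F}_l$. $\tilde{\boldsymbol{B}}=2^{-2(K-1)}\sum_qn_q^{-1}\boldsymbol{b}_q\boldsymbol{b}_q'$;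 $\boldsymbol{b}_q[\mathcal{I}]$ is the subvector with indices in $\mathcal{I}$ and $\tilde{\boldsymbol{B}}[\mathcal{I},\mathcal{J}]$ the submatrix. $\boldsymbol{c}_q[1]=\boldsymbol{b}_q[\mathcal{F}_1]$, and for $h\ge2$, $\boldsymbol{c}_q[h]=\boldsymbol{b}_q[\mathcal{F}_h]-\tilde{\boldsymbol{B}}[\mathcal{F}_h,\mathcal{F}_{\overline{h-1}}]\{\tilde{\boldsymbol{B}}[\mathcal{F}_{\overline{h-1}},\mathcal{F}_{\overline{h-1}}]\}^{-1}\boldsymbol{b}_q[\mathcal{F}_{\overline{h-1}}]$. $\hat{\boldsymbol{\theta}}_x[h]=2^{-(K-1)}\sum_q\boldsymbol{c}_q[h]\otimes\hat{\bar{\boldsymbol{x}}}(q)$ and $\hat{\boldsymbol{\theta}}_x=(\hat{\boldsymbol{\theta}}_x[1]',\dots,\hat{\boldsymbol{\theta}}_x[H]')'$. *)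

(* Defs.v *)
From HB Require Import structures.
From mathcomp Require Import all_boot all_order all_algebra.
From mathcomp Require Import mxtens.
Set Implicit Arguments. Unset Strict Implicit. Unset Printing Implicit Defensive.
Import Order.TTheory GRing.Theory Num.Theory.
Local Open Scope ring_scope.

Definition Ex (R : realFieldType) (T : finType) (A : {set T}) (m p : nat)
  (U : T -> 'M[R]_(m, p)) : 'M[R]_(m, p) :=
  (#|A|%:R)^-1 *: \sum_(Z in A) U Z.

Definition Cov (R : realFieldType) (T : finType) (A : {set T}) (m p : nat)
  (U : T -> 'cV[R]_m) (V : T -> 'cV[R]_p) : 'M[R]_(m, p) :=
  Ex A (fun Z => (U Z - Ex A U) *m (V Z - Ex A V)^T).

(* subvector v[I] (indices of I in increasing order) and submatrix M[I,J] *)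
Definition subcol (R : Type) (F : nat) (I : {set 'I_F}) (v : 'cV[R]_F)
  : 'cV[R]_#|I| := \col_(i < #|I|) v (enum_val i) ord0.
Definition subm (R : Type) (F : nat) (I J : {set 'I_F}) (M : 'M[R]_F)
  : 'M[R]_(#|I|, #|J|) := \matrix_(i < #|I|, j < #|J|) M (enum_val i) (enum_val j).

Section Factorial.
Variable R : realFieldType.
Variable K : nat.
Local Notation Q := (2 ^ K)%N.
Local Notation F := (2 ^ K).-1.

Definition lev (b : bool) : R := if b then 1 else -1.

Definition gfq (iota : 'I_Q -> 'I_K -> bool) (eff : 'I_F -> {set 'I_K})
  (f : 'I_F) (q : 'I_Q) : R := \prod_(k in eff f) lev (iota q k).

Definition bvec iota eff (q : 'I_Q) : 'cV[R]_F := \col_(f < F) gfq iota eff f q.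

(* CRFE assignment set: Z_i = treatment of unit i, n_q units in group q *)
Definition crfe (n : nat) (nq : 'I_Q -> nat) : {set {ffun 'I_n -> 'I_Q}} :=
  [set Z : {ffun 'I_n -> 'I_Q} | [forall q : 'I_Q, #|[set i : 'I_n | Z i == q]| == nq q]].

Variable n L : nat.
Variable Y : 'I_n -> 'I_Q -> R.          (* potential outcomes Y_i(q) *)
Variable x : 'I_n -> 'cV[R]_L.
Variable nq : 'I_Q -> nat.

Definition Ybar (q : 'I_Q) : R := (n%:R)^-1 * \sum_(i < n) Y i q.
Definition xbar : 'cV[R]_L := (n%:R)^-1 *: \sum_(i < n) x i.

Definition Sxx : 'M[R]_L :=
  ((n.-1)%:R)^-1 *: \sum_(i < n) (x i - xbar) *m (x i - xbar)^T.
Definition Sqx (q : 'I_Q) : 'M[R]_(1, L) :=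
  ((n.-1)%:R)^-1 *: \sum_(i < n) ((Y i q - Ybar q) *: (x i - xbar)^T).

Definition Yhat (Z : {ffun 'I_n -> 'I_Q}) (q : 'I_Q) : R :=
  ((nq q)%:R)^-1 * \sum_(i < n | Z i == q) Y i (Z i).
Definition xhat (Z : {ffun 'I_n -> 'I_Q}) (q : 'I_Q) : 'cV[R]_L :=
  ((nq q)%:R)^-1 *: \sum_(i < n | Z i == q) x i.

Variable iota : 'I_Q -> 'I_K -> bool.
Variable eff : 'I_F -> {set 'I_K}.

Definition tau : 'cV[R]_F :=
  (2%:R ^- K.-1) *: \sum_(q < Q) (Ybar q *: bvec iota eff q).
Definition tauhat (Z : {ffun 'I_n -> 'I_Q}) : 'cV[R]_F :=
  (2%:R ^- K.-1) *: \sum_(q < Q) (Yhat Z q *: bvec iota eff q).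

Definition Btil : 'M[R]_F :=
  (2%:R ^- (2 * K.-1)%N) *:
    \sum_(q < Q) (((nq q)%:R)^-1 *: (bvec iota eff q *m (bvec iota eff q)^T)).

Variable H : nat.
Variable tier : 'I_F -> 'I_H.           (* f belongs to tier F_{tier f} *)

Definition Ftier (h : 'I_H) : {set 'I_F} := [set f | tier f == h].
(* F_{\overline{h-1}} = union of the tiers strictly before h *)
Definition Fbefore (h : 'I_H) : {set 'I_F} := [set f | (tier f < h)%N].

Definition cvec (q : 'I_Q) (h : 'I_H) : 'cV[R]_#|Ftier h| :=
  if (val h == 0)%N then subcol (Ftier h) (bvec iota eff q)
  else subcol (Ftier h) (bvec iota eff q)
       - subm (Ftier h) (Fbefore h) Btil
         *m invmx (subm (Fbefore h) (Fbefore h) Btil)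
         *m subcol (Fbefore h) (bvec iota eff q).

Definition thetahat (h : 'I_H) (Z : {ffun 'I_n -> 'I_Q})
  : 'cV[R]_(#|Ftier h| * L) :=
  (2%:R ^- K.-1) *: \sum_(q < Q) tensmx (cvec q h) (xhat Z q).

Definition Wtx (h : 'I_H) : 'M[R]_(F * 1, #|Ftier h| * L) :=
  (2%:R ^- (2 * K.-1)%N) *:
    \sum_(q < Q) (((nq q)%:R)^-1 *: tensmx (bvec iota eff q *m (cvec q h)^T) (Sqx q)).

Definition Wxx (h : 'I_H) : 'M[R]_(#|Ftier h| * L, #|Ftier h| * L) :=
  (2%:R ^- (2 * K.-1)%N) *:
    \sum_(q < Q) (((nq q)%:R)^-1 *: tensmx (cvec q h *m (cvec q h)^T) Sxx).

End Factorial.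

(* Main.v *)
Require Import Defs.
From HB Require Import structures.
From mathcomp Require Import all_boot all_order all_algebra all_fingroup.
From mathcomp Require Import mxtens ring zify.
Set Implicit Arguments. Unset Strict Implicit. Unset Printing Implicit Defensive.
Import Order.TTheory GRing.Theory Num.Theory.
Local Open Scope ring_scope.

Section Main.
Variables (R : realFieldType) (K n L H : nat).
Local Notation Q := (2 ^ K)%N.
Local Notation F := (2 ^ K).-1.
Local Notation T := {ffun 'I_n -> 'I_Q}.
Variables (iota : 'I_Q -> 'I_K -> bool) (eff : 'I_F -> {set 'I_K}).
Variables (Y : 'I_n -> 'I_Q -> R) (x : 'I_n -> 'cV[R]_L).
Variables (nq : 'I_Q -> nat) (tier : 'I_F -> 'I_H).
Local Notation A := (crfe n nq).
Hypothesis bij : bijective (fun q : 'I_Q => [ffun k => iota q k]).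
Hypothesis eff_inj : injective eff.
Hypothesis eff_ne0 : forall f, eff f != set0.
Hypothesis nq_pos : forall q, (0 < nq q)%N.
Hypothesis nq_sum : (\sum_(q < Q) nq q)%N = n.

Definition sE (g : T -> R) : R := (#|A|%:R)^-1 * \sum_(Z in A) g Z.
Definition W (i : 'I_n) (q : 'I_Q) (Z : T) : R := (Z i == q)%:R.

Lemma sumW Z q : Z \in A -> \sum_i W i q Z = (nq q)%:R.
Proof.
rewrite inE => /forallP /(_ q) /eqP <-.
rewrite cardsE -sum1_card natr_sum [RHS]big_mkcond /=.
apply: eq_bigr => i _; rewrite /W unfold_in /=; change (eqn (Z i) q) with (Z i == q); by case: (Z i == q).
Qed.

Lemma A_nonempty : (0 < #|A|)%N.
Proof.
have Qpos : (0 < Q)%N by rewrite expn_gt0.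
pose d := Ordinal Qpos.
pose s := flatten [seq nseq (nq q) q | q <- enum 'I_Q].
have ss : size s = n.
  rewrite size_flatten /shape -map_comp.
  rewrite -nq_sum sumnE big_map big_enum /=.
  by apply: eq_bigr => q _; rewrite /= size_nseq.
pose Z : T := [ffun i : 'I_n => nth d s i].
apply/card_gt0P; exists Z; rewrite inE; apply/forallP => q; apply/eqP.
have -> : #|[set i : 'I_n | Z i == q]| = count_mem q s.
  rewrite -sum1_count (big_nth d) ss big_mkord cardsE -sum1_card.
  by apply: eq_bigl => i; rewrite unfold_in /Z /= ffunE.
rewrite /s count_flatten -map_comp.
rewrite sumnE big_map big_enum /=.
rewrite (bigD1 q) //= count_nseq /= eqxx mul1n big1 ?addn0 // => q' /negPf.
by rewrite count_nseq /= eq_sym => ->.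
Qed.

Lemma sum_perm (s : {perm 'I_n}) (g : T -> R) :
  \sum_(Z in A) g Z = \sum_(Z in A) g [ffun i => Z (s i)].
Proof.
pose h (Z : T) : T := [ffun i => Z (s i)].
pose h' (Z : T) : T := [ffun i => Z ((s^-1)%g i)].
have hK : cancel h h' by move=> Z; apply/ffunP => i; rewrite !ffunE permKV.
have h'K : cancel h' h by move=> Z; apply/ffunP => i; rewrite !ffunE permK.
rewrite (reindex h) /=; last by apply: onW_bij; exists h'.
apply: eq_bigl => Z; rewrite !inE; apply: eq_forallb => q.
suff -> : [set i | h Z i == q] = s @^-1: [set i | Z i == q].
  by rewrite card_preimset //; apply: perm_inj.
by apply/setP => i; rewrite !inE ffunE.
Qed.

Lemma sumW1 i q : n%:R * \sum_(Z in A) W i q Z = #|A|%:R * (nq q)%:R.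
Proof.
have E j : \sum_(Z in A) W j q Z = \sum_(Z in A) W i q Z.
  rewrite (sum_perm (tperm i j)); apply: eq_bigr => Z _.
  by rewrite /W ffunE tpermR.
rewrite mulr_natl.
transitivity (\sum_(j < n) \sum_(Z in A) W j q Z).
  by symmetry; under eq_bigr => j _ do rewrite E; rewrite sumr_const card_ord.
rewrite exchange_big /= mulr_natl -sumr_const; apply: eq_bigr => Z ZA.
by rewrite sumW.
Qed.

Lemma sumW2 i j q q' : i != j ->
  n%:R * (n%:R - 1) * \sum_(Z in A) W i q Z * W j q' Z
  = #|A|%:R * ((nq q)%:R * (nq q')%:R - (q == q')%:R * (nq q)%:R).
Proof.
move=> nij.
have E i' j' : i' != j' -> \sum_(Z in A) W i' q Z * W j' q' Z
                            = \sum_(Z in A) W i q Z * W j q' Z.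
  move=> nij'.
  pose s := tperm i' i; pose t := tperm (s j') j.
  rewrite (sum_perm (s * t)%g); apply: eq_bigr => Z _.
  rewrite /W !ffunE !permM /t tpermL tpermD.
  all: try by rewrite /s tpermL.
  all: try by rewrite eq_sym.
  by rewrite -{1}(tpermL i' i) -/s (inj_eq perm_inj) eq_sym.
have n0 : (0 < n)%N by apply: leq_ltn_trans (ltn_ord i).
have n1 : (n%:R - 1 : R) = (n.-1)%:R by rewrite -subn1 natrB.
pose S0 := \sum_(Z in A) W i q Z * W j q' Z.
have L1 : \sum_(i' < n) \sum_(j' < n | j' != i') \sum_(Z in A) W i' q Z * W j' q' Z
          = n%:R * (n%:R - 1) * S0.
  transitivity (\sum_(i' < n) \sum_(j' < n | j' != i') S0).
    apply: eq_bigr => i' _; apply: eq_bigr => j' nj; apply: E.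
    by rewrite eq_sym.
  have C i' : #|(fun k : 'I_n => k != i')| = n.-1.
    by have := cardC1 i'; rewrite card_ord => <-; apply: eq_card => k; rewrite !inE.
  under eq_bigr => i' _ do rewrite sumr_const C.
  by rewrite sumr_const card_ord n1 -mulrnA -[LHS]mulr_natl natrM (mulrC n.-1%:R).
rewrite -L1.
have WW i' Z : W i' q Z * W i' q' Z = (q == q')%:R * W i' q Z.
  rewrite /W; case: eqP => [->|]; last by rewrite !mul0r mulr0.
  by rewrite mulr1 mul1r.
have Wo i' Z : Z \in A -> \sum_(j' < n | j' != i') W j' q' Z = (nq q')%:R - W i' q' Z.
  by move=> ZA; rewrite -(sumW q' ZA) [in RHS](bigD1 i') //= addrC addrK.
transitivity (\sum_(Z in A) \sum_(i' < n) W i' q Z * \sum_(j' < n | j' != i') W j' q' Z).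
  rewrite exchange_big /=; apply: eq_bigr => i' _.
  rewrite exchange_big /=; apply: eq_bigr => Z _.
  by rewrite mulr_sumr.
rewrite mulr_natl -sumr_const; apply: eq_bigr => Z ZA.
under eq_bigr => i' _ do rewrite (Wo i' Z ZA) mulrBr WW.
by rewrite sumrB -!mulr_suml -!mulr_sumr !sumW // mulrC.
Qed.


Hypothesis n_gt1 : (1 < n)%N.

Definition mean (u : 'I_n -> R) : R := (n%:R)^-1 * \sum_i u i.
Definition hat (u : 'I_n -> R) (q : 'I_Q) (Z : T) : R :=
  ((nq q)%:R)^-1 * \sum_i W i q Z * u i.
Definition Sc (u w : 'I_n -> R) : R :=
  ((n.-1)%:R)^-1 * \sum_i (u i - mean u) * (w i - mean w).
Definition sCov (g h : T -> R) : R := sE (fun Z => (g Z - sE g) * (h Z - sE h)).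

Lemma nR0 : (n%:R : R) != 0.
Proof. by rewrite pnatr_eq0 -lt0n ltnW. Qed.
Lemma AR0 : (#|A|%:R : R) != 0.
Proof. by rewrite pnatr_eq0 -lt0n A_nonempty. Qed.
Lemma nqR0 q : ((nq q)%:R : R) != 0.
Proof. by rewrite pnatr_eq0 -lt0n nq_pos. Qed.
Lemma npred : ((n.-1)%:R : R) = n%:R - 1.
Proof. by rewrite -subn1 natrB // ltnW. Qed.
Lemma n1R0 : (n%:R - 1 : R) != 0.
Proof. by rewrite -npred pnatr_eq0 -lt0n; lia. Qed.

Lemma SW1 i q : \sum_(Z in A) W i q Z = #|A|%:R * (nq q)%:R / n%:R.
Proof.
apply: (mulfI nR0); rewrite sumW1; field; exact: nR0.
Qed.

Lemma SW2 i j q q' : i != j -> \sum_(Z in A) W i q Z * W j q' Z =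
  #|A|%:R * ((nq q)%:R * (nq q')%:R - (q == q')%:R * (nq q)%:R)
  / (n%:R * (n%:R - 1)).
Proof.
move=> nij; apply: (mulfI (mulf_neq0 nR0 n1R0)); rewrite sumW2 //.
field; rewrite nR0 n1R0 //.
Qed.

Lemma sE_const c : sE (fun=> c) = c.
Proof. rewrite /sE sumr_const -mulr_natr; field; exact: AR0. Qed.

Lemma sED g h : sE (fun Z => g Z + h Z) = sE g + sE h.
Proof. by rewrite /sE big_split mulrDr. Qed.

Lemma sEZ c g : sE (fun Z => c * g Z) = c * sE g.
Proof. by rewrite /sE -mulr_sumr mulrCA. Qed.

Lemma sE_sum (m : nat) (g : 'I_m -> T -> R) :
  sE (fun Z => \sum_(k < m) g k Z) = \sum_(k < m) sE (g k).
Proof. by rewrite /sE exchange_big mulr_sumr. Qed.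

Lemma sE_eq g h : (forall Z, Z \in A -> g Z = h Z) -> sE g = sE h.
Proof. by move=> E; rewrite /sE (eq_bigr _ E). Qed.

Lemma sCovE g h : sCov g h = sE (fun Z => g Z * h Z) - sE g * sE h.
Proof.
rewrite /sCov.
rewrite (sE_eq (h := fun Z => g Z * h Z + ((- sE h) * g Z + ((- sE g) * h Z + sE g * sE h)))); last by move=> Z _ /=; move: (sE g) (sE h) (g Z) (h Z) => a b c d; ring.
rewrite !sED sE_const !sEZ; ring.
Qed.

Lemma sCov_shiftl g h d : sCov (fun Z => g Z + d) h = sCov g h.
Proof.
rewrite !sCovE.
rewrite (sE_eq (h := fun Z => g Z * h Z + d * h Z)); last by move=> Z _; ring.
rewrite !sED sEZ sE_const; ring.
Qed.

Lemma sCov_scale ca cb g h :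
  sCov (fun Z => ca * g Z) (fun Z => cb * h Z) = ca * cb * sCov g h.
Proof.
rewrite !sCovE.
rewrite (sE_eq (h := fun Z => (ca * cb) * (g Z * h Z))); last by move=> Z _; ring.
rewrite !sEZ; ring.
Qed.

Lemma sCov_sum (a b : 'I_Q -> R) (g h : 'I_Q -> T -> R) :
  sCov (fun Z => \sum_q a q * g q Z) (fun Z => \sum_q b q * h q Z)
  = \sum_q \sum_q' a q * b q' * sCov (g q) (h q').
Proof.
rewrite sCovE.
rewrite (sE_eq (h := fun Z => \sum_q \sum_q' (a q * b q') * (g q Z * h q' Z))); last first.
  move=> Z _; rewrite mulr_suml; apply: eq_bigr => q _.
  rewrite mulr_sumr; apply: eq_bigr => q' _; ring.
rewrite (sE_sum (fun q Z => \sum_q' a q * b q' * (g q Z * h q' Z))).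
rewrite (sE_sum (fun q Z => a q * g q Z)) (sE_sum (fun q Z => b q * h q Z)).
rewrite mulr_suml -sumrB; apply: eq_bigr => q _.
rewrite (sE_sum (fun q' Z => a q * b q' * (g q Z * h q' Z))) mulr_sumr -sumrB.
apply: eq_bigr => q' _.
rewrite (sEZ (a q * b q') (fun Z => g q Z * h q' Z)) !sEZ sCovE; ring.
Qed.

Lemma sE_hat u q : sE (hat u q) = mean u.
Proof.
rewrite /sE /hat -mulr_sumr exchange_big.
under eq_bigr => i _ do rewrite -mulr_suml SW1.
rewrite /mean -!mulr_sumr.
field; rewrite AR0 nqR0 nR0 //.
Qed.

Lemma hat_center u q Z : Z \in A ->
  hat u q Z - mean u = ((nq q)%:R)^-1 * \sum_i W i q Z * (u i - mean u).
Proof.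
move=> ZA; rewrite /hat.
under [in RHS]eq_bigr => i _ do rewrite mulrBr.
rewrite sumrB -mulr_suml sumW //; field; exact: nqR0.
Qed.

Lemma sCov_hat u w q q' :
  sCov (hat u q) (hat w q') = ((q == q')%:R / (nq q)%:R - (n%:R)^-1) * Sc u w.
Proof.
rewrite /sCov !sE_hat.
rewrite (sE_eq (h := fun Z => ((nq q)%:R)^-1 * ((nq q')%:R)^-1 *
   \sum_i \sum_j (u i - mean u) * (w j - mean w) * (W i q Z * W j q' Z))); last first.
  move=> Z ZA; rewrite !hat_center // mulrACA mulr_suml; congr (_ * _).
  apply: eq_bigr => i _; rewrite mulr_sumr; apply: eq_bigr => j _; ring.
rewrite sEZ /sE exchange_big mulr_sumr.
under eq_bigr => i _ do rewrite exchange_big mulr_sumr.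
pose D : R := (q == q')%:R * (#|A|%:R * (nq q)%:R / n%:R).
pose O : R := #|A|%:R * ((nq q)%:R * (nq q')%:R - (q == q')%:R * (nq q)%:R)
  / (n%:R * (n%:R - 1)).
have X i : \sum_j #|A|%:R^-1 * \sum_(Z in A) (u i - mean u) * (w j - mean w) * (W i q Z * W j q' Z)
   = #|A|%:R^-1 * (u i - mean u) * (w i - mean w) * (D - O).
  under eq_bigr => j _ do rewrite -mulr_sumr.
  rewrite (bigD1 i) //=.
  have -> : \sum_(Z in A) W i q Z * W i q' Z = D.
    rewrite /D -(SW1 i q) mulr_sumr; apply: eq_bigr => Z _; rewrite /W.
    by case: eqP => [->|]; rewrite ?mulr0 ?mul0r ?mulr1 ?mul1r.
  have SW2' j : j != i -> \sum_(Z in A) W i q Z * W j q' Z = O.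
    by move=> nj; rewrite SW2 // eq_sym.
  under eq_bigr => j nj do rewrite (SW2' j nj).
  have -> : \sum_(j < n | j != i) #|A|%:R^-1 * ((u i - mean u) * (w j - mean w) * O)
     = #|A|%:R^-1 * (u i - mean u) * O * \sum_(j < n | j != i) (w j - mean w).
    by rewrite [RHS]mulr_sumr; apply: eq_bigr => j _; ring.
  have -> : \sum_(j < n | j != i) (w j - mean w) = - (w i - mean w).
    apply/eqP; rewrite -addr_eq0 addrC -(bigD1 i (P := predT)) //=.
    rewrite sumrB sumr_const card_ord /mean -[_ *+ n]mulr_natr.
    apply/eqP; field; exact: nR0.
  ring.
under eq_bigr => i _ do rewrite X.
rewrite -mulr_suml /Sc npred.
have -> : \sum_i #|A|%:R^-1 * (u i - mean u) * (w i - mean w)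
  = #|A|%:R^-1 * \sum_i (u i - mean u) * (w i - mean w).
  rewrite mulr_sumr; apply: eq_bigr => i _; ring.
rewrite /D /O.
have H1 := nqR0 q; have H2 := nqR0 q'; have H3 := AR0; have H4 := nR0; have H5 := n1R0.
case: (eqVneq q q') => [<-|nqq]; rewrite ?eqxx ?(negPf nqq) /=; field; rewrite ?H1 ?H2 ?H3 ?H4 ?H5 //.
Qed.

Lemma sum_levels (G : 'I_K -> bool -> R) :
  \sum_(q < Q) \prod_(k < K) G k (iota q k) = \prod_(k < K) (G k true + G k false).
Proof.
transitivity (\prod_(k < K) \sum_(b : bool) G k b); last first.
  by apply: eq_bigr => k _; rewrite big_bool.
rewrite bigA_distr_bigA /= (reindex (fun q : 'I_Q => [ffun k => iota q k])) /=; last first.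
  exact: onW_bij.
by apply: eq_bigr => q _; apply: eq_bigr => k _; rewrite ffunE.
Qed.

Lemma gfqE f q : gfq R iota eff f q =
  \prod_(k < K) (if k \in eff f then lev R (iota q k) else 1).
Proof. by rewrite /gfq big_mkcond. Qed.

Lemma sum_g f : \sum_(q < Q) gfq R iota eff f q = 0.
Proof.
under eq_bigr => q _ do rewrite gfqE.
rewrite (sum_levels (fun k b => if k \in eff f then lev R b else 1)).
have /set0Pn [k Hk] := eff_ne0 f.
by rewrite (bigD1 k) //= Hk /lev subrr mul0r.
Qed.

Lemma sum_gg f f' : \sum_(q < Q) gfq R iota eff f q * gfq R iota eff f' q
   = (f == f')%:R * Q%:R.
Proof.
under eq_bigr => q _ do rewrite !gfqE -big_split /=.
rewrite (sum_levels (fun k b => (if k \in eff f then lev R b else 1) *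
                                 (if k \in eff f' then lev R b else 1))).
case: (eqVneq f f') => [<-|nff].
  rewrite mul1r natrX.
  rewrite (eq_bigr (fun=> 2%:R)); first by rewrite prodr_const card_ord.
  by move=> k _; case: (k \in eff f); rewrite /lev ?mulr1 ?mulN1r ?opprK.
have : ~~ [forall k, (k \in eff f) == (k \in eff f')].
  apply: contra nff => /forallP E; apply/eqP/eff_inj/setP => k; exact/eqP/E.
rewrite negb_forall => /existsP [k Hk].
rewrite mul0r (bigD1 k) //=.
move: Hk; case: (k \in eff f); case: (k \in eff f') => //= _;
  by rewrite /lev ?mulr1 ?mul1r subrr mul0r.
Qed.

Lemma sum_bvec : \sum_(q < Q) bvec R iota eff q = 0.
Proof.
apply/matrixP => f j; rewrite summxE !mxE.
by under eq_bigr => q _ do rewrite mxE; rewrite sum_g.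
Qed.

Lemma sum_bbT : \sum_(q < Q) bvec R iota eff q *m (bvec R iota eff q)^T = (Q%:R)%:M.
Proof.
apply/matrixP => f f'; rewrite summxE !mxE.
under eq_bigr => q _ do rewrite !mxE big_ord1 !mxE.
by rewrite sum_gg mulrC mulr_natr.
Qed.

Definition sel (I : {set 'I_F}) : 'M[R]_(#|I|, F) :=
  rowsub (fun i : 'I_#|I| => enum_val i) 1%:M.

Lemma subcolE I v : subcol I v = sel I *m v.
Proof.
rewrite /sel -rowsubE; apply/matrixP => i j; by rewrite !mxE (ord1 j).
Qed.

Lemma selT I : (sel I)^T = colsub (fun i : 'I_#|I| => enum_val i) 1%:M.
Proof. by apply/matrixP => a b; rewrite !mxE eq_sym. Qed.

Lemma submE I J M : subm I J M = sel I *m M *m (sel J)^T.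
Proof.
rewrite selT mulmx_colsub mulmx1 /sel -rowsubE.
by apply/matrixP => i j; rewrite !mxE.
Qed.

Lemma sel_selT I : sel I *m (sel I)^T = 1%:M.
Proof.
rewrite selT mulmx_colsub mulmx1 /sel.
by apply/matrixP => i j; rewrite !mxE (inj_eq enum_val_inj).
Qed.

Lemma sel_sub (I J : {set 'I_F}) : I \subset J -> sel I *m ((sel J)^T *m sel J) = sel I.
Proof.
move=> sIJ.
have inJ (i : 'I_#|I|) : enum_val i \in J by apply: (subsetP sIJ); exact: enum_valP.
pose h (i : 'I_#|I|) : 'I_#|J| := enum_rank_in (inJ i) (enum_val i).
have selI : sel I = rowsub h (sel J).
  apply/matrixP => i b; rewrite !mxE /h enum_rankK_in //.
by rewrite selI mul_rowsub_mx mulmxA sel_selT mul1mx.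
Qed.


Local Notation Bt := (Btil R nq iota eff).
Local Notation b := (bvec R iota eff).

Lemma BtT : Bt^T = Bt.
Proof.
rewrite /Btil linearZ /= linear_sum /=; congr (_ *: _).
by apply: eq_bigr => q _; rewrite linearZ /= trmx_mul trmxK.
Qed.

Lemma two_pos m : (2%:R ^+ m : R) != 0.
Proof. by rewrite expf_neq0 // pnatr_eq0. Qed.

Lemma Bt_sum : \sum_(q < Q) ((nq q)%:R^-1 *: (b q *m (b q)^T)) = (2%:R ^+ (2 * K.-1)) *: Bt.
Proof. by rewrite /Btil scalerA mulfV ?scale1r // two_pos. Qed.

Lemma Bt_unit (I : {set 'I_F}) : subm I I Bt \in unitmx.
Proof.
rewrite -row_free_unit; apply: inj_row_free => v.
rewrite submE => Hv.
set w := v *m sel I.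
have Hw : w *m Bt *m w^T = 0.
  by rewrite /w trmx_mul !mulmxA; move: Hv; rewrite !mulmxA => ->; rewrite mul0mx.
have E : (w *m Bt *m w^T) 0 0 = (2%:R ^+ (2 * K.-1))^-1 *
     \sum_(q < Q) (nq q)%:R^-1 * ((w *m b q) 0 0) ^+ 2.
  rewrite /Btil -scalemxAr -scalemxAl mulmx_sumr mulmx_suml mxE summxE; congr (_ * _).
  apply: eq_bigr => q _.
  rewrite -scalemxAr -scalemxAl mxE !mulmxA -(mulmxA (w *m b q)) -trmx_mul mxE big_ord1 !mxE.
  by rewrite expr2.
have Hs : \sum_(q < Q) (nq q)%:R^-1 * ((w *m b q) 0 0) ^+ 2 = 0.
  have := E; rewrite Hw mxE => /esym /eqP; rewrite mulf_eq0 invr_eq0 (negPf (two_pos _)) /=.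
  by move/eqP.
have nn (q : 'I_Q) : true -> 0 <= (nq q)%:R^-1 * ((w *m b q) 0 0) ^+ 2.
  by move=> _; rewrite mulr_ge0 ?invr_ge0 ?ler0n ?sqr_ge0.
have wb q : w *m b q = 0.
  have := psumr_eq0P nn Hs (i := q) isT.
  move=> /eqP; rewrite mulf_eq0 invr_eq0 pnatr_eq0 eqn0Ngt nq_pos /= sqrf_eq0 => /eqP H0.
  by apply/matrixP => i j; rewrite (ord1 i) (ord1 j) H0 mxE.
have w0 : w = 0.
  have : w *m \sum_(q < Q) (b q *m (b q)^T) = 0.
    by rewrite mulmx_sumr big1 // => q _; rewrite mulmxA wb mul0mx.
  rewrite sum_bbT mul_mx_scalar => /eqP; rewrite scalemx_eq0 pnatr_eq0 expn_eq0 /=.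
  by move/eqP.
by rewrite -[v]mulmx1 -(sel_selT I) mulmxA -/w w0 mul0mx.
Qed.

Definition Pm (h : 'I_H) : 'M[R]_(#|Ftier tier h|, F) :=
  if (val h == 0)%N then sel (Ftier tier h)
  else sel (Ftier tier h) - subm (Ftier tier h) (Fbefore tier h) Bt
       *m invmx (subm (Fbefore tier h) (Fbefore tier h) Bt) *m sel (Fbefore tier h).

Lemma cvecE q h : cvec R nq iota eff tier q h = Pm h *m b q.
Proof.
by rewrite /cvec /Pm; case: ifP => _; rewrite !subcolE // mulmxBl !mulmxA.
Qed.

Lemma PmT h h' : Pm h *m Bt *m (Pm h')^T = (Pm h' *m Bt *m (Pm h)^T)^T.
Proof. by rewrite !trmx_mul trmxK BtT mulmxA. Qed.

Lemma orth_lt h h' : (val h < val h')%N -> Pm h *m Bt *m (Pm h')^T = 0.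
Proof.
move=> hlt.
set S := sel (Fbefore tier h').
have sub1 : Ftier tier h \subset Fbefore tier h'.
  by apply/subsetP => f; rewrite !inE => /eqP ->.
have sub2 : Fbefore tier h \subset Fbefore tier h'.
  by apply/subsetP => f; rewrite !inE => /ltn_trans; apply.
have PD : Pm h *m (S^T *m S) = Pm h.
  rewrite /Pm; case: ifP => _; first by rewrite sel_sub.
  by rewrite mulmxBl sel_sub // -(mulmxA _ (sel (Fbefore tier h))) sel_sub.
have h'pos : (val h' == 0)%N = false by apply/negbTE; rewrite -lt0n; lia.
have E : Pm h' *m Bt *m S^T = 0.
  set S' := sel (Ftier tier h').
  set M := S *m Bt *m S^T.
  have Mu : M \in unitmx by rewrite /M -submE Bt_unit.
  have -> : Pm h' = S' - S' *m Bt *m S^T *m invmx M *m S by rewrite /Pm h'pos !submE.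
  rewrite !mulmxBl.
  have -> : S' *m Bt *m S^T *m invmx M *m S *m Bt *m S^T
           = S' *m Bt *m S^T *m (invmx M *m M) by rewrite /M !mulmxA.
  by rewrite mulVmx // mulmx1 subrr.
rewrite -PD -!mulmxA mulmxA.
have -> : S *m (Bt *m (Pm h')^T) = (Pm h' *m Bt *m S^T)^T.
  by rewrite !trmx_mul trmxK BtT mulmxA.
by rewrite E trmx0 mulmx0.
Qed.

Lemma orth h h' : h != h' -> Pm h *m Bt *m (Pm h')^T = 0.
Proof.
move=> nhh; case: (ltngtP (val h) (val h')) => [lt|gt|eq].
- exact: orth_lt.
- by rewrite PmT orth_lt // trmx0.
- by move: nhh; rewrite (val_inj eq) eqxx.
Qed.

Lemma sum_cvec h : \sum_(q < Q) cvec R nq iota eff tier q h = 0.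
Proof.
under eq_bigr => q _ do rewrite cvecE.
by rewrite -mulmx_sumr sum_bvec mulmx0.
Qed.

Lemma sum_cc h h' : h != h' ->
  \sum_(q < Q) ((nq q)%:R^-1 *: (cvec R nq iota eff tier q h *m (cvec R nq iota eff tier q h')^T)) = 0.
Proof.
move=> nhh.
under eq_bigr => q _ do rewrite !cvecE trmx_mul mulmxA -(mulmxA (Pm h)) scalemxAl scalemxAr.
by rewrite -mulmx_suml -mulmx_sumr Bt_sum -scalemxAr -scalemxAl orth // scaler0.
Qed.


Lemma ExE m p (U : T -> 'M[R]_(m,p)) i j : (Ex A U) i j = sE (fun Z => U Z i j).
Proof. by rewrite /Ex /sE mxE summxE. Qed.

Lemma CovE m p (U : T -> 'cV[R]_m) (V : T -> 'cV[R]_p) i j :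
  (Cov A U V) i j = sCov (fun Z => U Z i ord0) (fun Z => V Z j ord0).
Proof.
rewrite /Cov ExE /sCov; apply: sE_eq => Z _.
by rewrite mxE big_ord1 [_^T _ _]mxE [(U Z - _) _ _]mxE [(V Z - _) _ _]mxE [(- Ex A U) _ _]mxE [(- Ex A V) _ _]mxE !ExE.
Qed.

Lemma sCov_eq g g' h h' : g =1 g' -> h =1 h' -> sCov g h = sCov g' h'.
Proof.
move=> E1 E2.
have Eg : sE g = sE g' by apply: sE_eq => Z _; exact: E1.
have Eh : sE h = sE h' by apply: sE_eq => Z _; exact: E2.
by rewrite /sCov Eg Eh; apply: sE_eq => Z _; rewrite E1 E2.
Qed.

Lemma sCov_shiftr g h d : sCov g (fun Z => h Z + d) = sCov g h.
Proof.
rewrite !sCovE.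
rewrite (sE_eq (h := fun Z => g Z * h Z + d * g Z)); last by move=> Z _; ring.
rewrite !sED sE_const sEZ; ring.
Qed.

Lemma sum_delta (m : nat) (i : 'I_m) (f : 'I_m -> R) :
  \sum_(j < m) (i == j)%:R * f j = f i.
Proof.
rewrite (bigD1 i) //= eqxx mul1r big1 ?addr0 // => j nj.
by rewrite eq_sym (negPf nj) mul0r.
Qed.

Lemma sE_lin (cc : R) (a : 'I_Q -> R) (u : 'I_Q -> 'I_n -> R) (d : R) :
  sE (fun Z => cc * \sum_q a q * hat (u q) q Z + d) = cc * \sum_q a q * mean (u q) + d.
Proof.
rewrite sED sE_const (sEZ cc (fun Z => \sum_q a q * hat (u q) q Z)).
rewrite (sE_sum (fun q Z => a q * hat (u q) q Z)).
congr (_ * _ + _); apply: eq_bigr => q _; by rewrite sEZ sE_hat.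
Qed.

Lemma sCov_lin cc a u d cc' a' w d' : \sum_q a' q = 0 ->
  sCov (fun Z => cc * \sum_q a q * hat (u q) q Z + d)
       (fun Z => cc' * \sum_q a' q * hat w q Z + d')
  = cc * cc' * \sum_q a q * a' q * (nq q)%:R^-1 * Sc (u q) w.
Proof.
move=> sa.
rewrite (sCov_shiftl (fun Z => cc * \sum_q a q * hat (u q) q Z)).
rewrite (sCov_shiftr _ (fun Z => cc' * \sum_q a' q * hat w q Z)).
rewrite (sCov_scale cc cc' (fun Z => \sum_q a q * hat (u q) q Z)
                           (fun Z => \sum_q a' q * hat w q Z)).
rewrite (sCov_sum a a' (fun q => hat (u q) q) (fun q => hat w q)).
congr (_ * _); apply: eq_bigr => q _.
under eq_bigr => q' _ do rewrite sCov_hat.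
transitivity (\sum_q' ((a q * Sc (u q) w / (nq q)%:R) * ((q == q')%:R * a' q')
                       - (a q * Sc (u q) w / n%:R) * a' q')).
  by apply: eq_bigr => q' _; ring.
by rewrite sumrB -!mulr_sumr sum_delta sa mulr0 subr0; ring.
Qed.


Lemma hatY Z q : Yhat Y nq Z q = hat (fun i => Y i q) q Z.
Proof.
rewrite /Yhat /hat; congr (_ * _); rewrite big_mkcond; apply: eq_bigr => i _.
by rewrite /W; case: eqP => [->|_]; rewrite ?mul1r ?mul0r.
Qed.

Lemma xhatE Z q l j : xhat x nq Z q l j = hat (fun i => x i l j) q Z.
Proof.
rewrite /xhat /hat mxE summxE; congr (_ * _); rewrite big_mkcond.
apply: eq_bigr => i _.
by rewrite /W; case: (Z i == q); rewrite ?mul1r ?mul0r.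
Qed.

Lemma tau_entry Z a : (tauhat Y nq iota eff Z - tau Y iota eff) a ord0
  = 2%:R ^- K.-1 * \sum_q gfq R iota eff a q * hat (fun i => Y i q) q Z
    + - (2%:R ^- K.-1 * \sum_q gfq R iota eff a q * mean (fun i => Y i q)).
Proof.
rewrite /tauhat /tau !mxE !summxE.
by congr (_ * _ - _ * _); apply: eq_bigr => q _; rewrite !mxE ?hatY mulrC.
Qed.

Lemma ord1_unindex m (k : 'I_(m * 1)) : (mxtens_unindex k).2 = ord0.
Proof. exact: ord1. Qed.

Lemma theta_entry h Z k : thetahat x nq iota eff tier h Z k ord0
  = 2%:R ^- K.-1 * \sum_q cvec R nq iota eff tier q h (mxtens_unindex k).1 ord0
      * hat (fun i => x i (mxtens_unindex k).2 ord0) q Z + 0.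
Proof.
rewrite addr0 /thetahat !mxE !summxE.
congr (_ * _); apply: eq_bigr => q _; rewrite mxE.
set j1 := (mxtens_unindex _).1; set j2 := (mxtens_unindex _).2.
set j3 := (mxtens_unindex _).1; set j4 := (mxtens_unindex _).2.
by rewrite (ord1 j3) (ord1 j4) xhatE.
Qed.

Lemma c2 : 2%:R ^- K.-1 * 2%:R ^- K.-1 = 2%:R ^- (2 * K.-1) :> R.
Proof. by rewrite -invfM -exprD addnn -mul2n. Qed.


Lemma SC h f : \sum_q cvec R nq iota eff tier q h f ord0 = 0.
Proof. by have := congr1 (fun M : 'cV[R]_#|Ftier tier h| => M f ord0) (sum_cvec h); rewrite /= summxE mxE. Qed.

Lemma SCC h h' f f' : h != h' ->
  \sum_q cvec R nq iota eff tier q h f ord0 * cvec R nq iota eff tier q h' f' ord0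
     * (nq q)%:R^-1 = 0.
Proof.
move=> nhh; have := congr1 (fun M : 'M[R]_(#|Ftier tier h|, #|Ftier tier h'|) => M f f') (sum_cc nhh); rewrite /= summxE mxE => E; apply: (etrans _ E).
apply: eq_bigr => q _; rewrite !mxE big_ord1 !mxE; ring.
Qed.

Lemma unindex_cast1 (a : 'I_F) e :
  (mxtens_unindex (m := F) (n := 1) (cast_ord e a)).1 = a.
Proof. by apply: val_inj => /=; rewrite divn1. Qed.

Lemma SqxE q l : Sqx Y x q ord0 l = Sc (fun i => Y i q) (fun i => x i l ord0).
Proof.
rewrite /Sqx /Sc mxE summxE; congr (_ * _); apply: eq_bigr => i _.
by rewrite !mxE summxE.
Qed.

Lemma SxxE l l' : Sxx x l l' = Sc (fun i => x i l ord0) (fun i => x i l' ord0).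
Proof.
rewrite /Sxx /Sc mxE summxE; congr (_ * _); apply: eq_bigr => i _.
by rewrite !mxE big_ord1 !mxE !summxE.
Qed.

Lemma main : let tauhatc := fun Z => tauhat Y nq iota eff Z - tau Y iota eff in
  [/\ Ex A tauhatc = 0,
      forall h : 'I_H, Ex A (thetahat x nq iota eff tier h) = 0,
      forall h : 'I_H,
        Cov A tauhatc (thetahat x nq iota eff tier h)
        = castmx (muln1 _, erefl _) (Wtx Y x nq iota eff tier h),
      forall h : 'I_H,
        Cov A (thetahat x nq iota eff tier h) (thetahat x nq iota eff tier h)
        = Wxx x nq iota eff tier h
    & forall h h' : 'I_H, h != h' ->
        Cov A (thetahat x nq iota eff tier h) (thetahat x nq iota eff tier h')
        = 0].
Proof.
move=> tauhatc; split.
- apply/matrixP => a j; rewrite (ord1 j) ExE !mxE.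
  rewrite (sE_eq (h := fun Z => 2%:R ^- K.-1 * \sum_q gfq R iota eff a q * hat (fun i => Y i q) q Z
    + - (2%:R ^- K.-1 * \sum_q gfq R iota eff a q * mean (fun i => Y i q)))).
    by rewrite sE_lin addrN.
  by move=> Z _; rewrite /tauhatc tau_entry.
- move=> h; apply/matrixP => k j; rewrite (ord1 j) ExE !mxE.
  rewrite (sE_eq (h := fun Z => 2%:R ^- K.-1 * \sum_q cvec R nq iota eff tier q h (mxtens_unindex k).1 ord0
      * hat (fun i => x i (mxtens_unindex k).2 ord0) q Z + 0)).
    by rewrite sE_lin addr0 -mulr_suml SC mul0r mulr0.
  by move=> Z _; rewrite theta_entry.
- move=> h; apply/matrixP => a k; rewrite CovE castmxE.
  rewrite (sCov_eq (g' := fun Z => 2%:R ^- K.-1 * \sum_q gfq R iota eff a q * hat (fun i => Y i q) q Z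
    + - (2%:R ^- K.-1 * \sum_q gfq R iota eff a q * mean (fun i => Y i q)))
    (h' := fun Z => 2%:R ^- K.-1 * \sum_q cvec R nq iota eff tier q h (mxtens_unindex k).1 ord0
      * hat (fun i => x i (mxtens_unindex k).2 ord0) q Z + 0)); last 2 first.
  + by move=> Z; rewrite /tauhatc tau_entry.
  + by move=> Z; rewrite theta_entry.
  rewrite sCov_lin ?SC // /Wtx mxE summxE c2.
  congr (_ * _); apply: eq_bigr => q _.
  rewrite mxE [(_ *t _) _ _]mxE unindex_cast1 cast_ord_id.
  set j1 := (mxtens_unindex (cast_ord _ a)).2; rewrite (ord1 j1) SqxE.
  rewrite mxE big_ord1 !mxE; ring.
- move=> h; apply/matrixP => k k'; rewrite CovE.
  rewrite (sCov_eq (g' := fun Z => 2%:R ^- K.-1 * \sum_q cvec R nq iota eff tier q h (mxtens_unindex k).1 ord0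
      * hat (fun i => x i (mxtens_unindex k).2 ord0) q Z + 0)
    (h' := fun Z => 2%:R ^- K.-1 * \sum_q cvec R nq iota eff tier q h (mxtens_unindex k').1 ord0
      * hat (fun i => x i (mxtens_unindex k').2 ord0) q Z + 0)); last 2 first.
  + by move=> Z; rewrite theta_entry.
  + by move=> Z; rewrite theta_entry.
  rewrite sCov_lin ?SC // /Wxx mxE summxE c2.
  congr (_ * _); apply: eq_bigr => q _.
  rewrite mxE [(_ *t _) _ _]mxE SxxE mxE big_ord1 !mxE; ring.
- move=> h h' nhh; apply/matrixP => k k'; rewrite CovE.
  rewrite (sCov_eq (g' := fun Z => 2%:R ^- K.-1 * \sum_q cvec R nq iota eff tier q h (mxtens_unindex k).1 ord0
      * hat (fun i => x i (mxtens_unindex k).2 ord0) q Z + 0)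
    (h' := fun Z => 2%:R ^- K.-1 * \sum_q cvec R nq iota eff tier q h' (mxtens_unindex k').1 ord0
      * hat (fun i => x i (mxtens_unindex k').2 ord0) q Z + 0)); last 2 first.
  + by move=> Z; rewrite theta_entry.
  + by move=> Z; rewrite theta_entry.
  by rewrite sCov_lin ?SC // -mulr_suml SCC // mul0r mulr0 mxE.
Qed.

End Main.

Theorem proposition6 (R : realFieldType) (K n L H : nat)
  (iota : 'I_(2 ^ K) -> 'I_K -> bool)
  (eff : 'I_(2 ^ K).-1 -> {set 'I_K})
  (Y : 'I_n -> 'I_(2 ^ K) -> R) (x : 'I_n -> 'cV[R]_L)
  (nq : 'I_(2 ^ K) -> nat)
  (tier : 'I_(2 ^ K).-1 -> 'I_H) :
  (1 <= K)%N ->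
  (* iota is a bijection of the combinations onto {-1,+1}^K *)
  bijective (fun q : 'I_(2 ^ K) => [ffun k => iota q k]) ->
  (* eff enumerates the nonempty subsets of the factors *)
  injective eff ->
  (forall f, eff f != set0) ->
  (forall A : {set 'I_K}, A != set0 -> exists f, eff f = A) ->
  (* CRFE group sizes *)
  (forall q, (1 <= nq q)%N) ->
  (\sum_(q < 2 ^ K) nq q)%N = n ->
  (* tiers F_h = {f | tier f = h} are nonempty *)
  (forall h : 'I_H, exists f, tier f = h) ->
  let A := crfe n nq in
  let tauhatc := fun Z => tauhat Y nq iota eff Z - tau Y iota eff in
  [/\ Ex A tauhatc = 0,
      forall h : 'I_H, Ex A (thetahat x nq iota eff tier h) = 0,
      forall h : 'I_H,
        Cov A tauhatc (thetahat x nq iota eff tier h)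
        = castmx (muln1 _, erefl _) (Wtx Y x nq iota eff tier h),
      forall h : 'I_H,
        Cov A (thetahat x nq iota eff tier h) (thetahat x nq iota eff tier h)
        = Wxx x nq iota eff tier h
    & forall h h' : 'I_H, h != h' ->
        Cov A (thetahat x nq iota eff tier h) (thetahat x nq iota eff tier h')
        = 0].
Proof.
move=> K1 bij einj ene0 _ nqpos nqsum _.
have n_gt1 : (1 < n)%N.
  rewrite -nqsum; apply: (@leq_trans (2 ^ K)).
    by rewrite -{1}(expn0 2) ltn_exp2l.
  rewrite -{1}[(2 ^ K)%N]card_ord -sum1_card; apply: leq_sum => q _; exact: nqpos.
exact: (main Y x tier bij einj ene0 nqpos nqsum n_gt1).
Qed.
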